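(* Let $(E,\mu)$ and $(F,\nu)$ be fuzzy Riesz spaces and $T:E\rightarrow F$ a fuzzy Riesz homomorphism. (1) If $B$ is a fuzzy ideal in $T(E)$, then $T^{-1}(B)$ is a fuzzy ideal in $E$. (2) If $B_1$ is a fuzzy ideal in $F$, then $T^{-1}(B_1)$ is a fuzzy ideal in $E$.
   Context: A fuzzy order on a real vector space $E$ is a map $\mu:E\times E\to[0,1]$ with $\mu(x,x)=1$; $\mu(x,y)+\mu(y,x)>1$ implies $x=y$; and $\mu(x,z)\ge\sup_{y}\min(\mu(x,y),\mu(y,z))$. Write $x\le y$ for $\mu(x,y)>\frac12$; suprema/infima are taken with respect to this relation. $(E,\mu)$ is a fuzzy ordered linear space if $\mu(x_1,x_2)>\frac12$ implies $\mu(x_1,x_2)\le\mu(x_1+x,x_2+x)$ for all $x$ and $\mu(x_1,x_2)\le\mu(\alpha x_1,\alpha x_2)$ for all $\alpha>0$; it is a fuzzy Riesz space if $x\vee y=\sup\{x,y\}$ and $x\wedge y=\inf\{x,y\}$ exist for all $x,y$. $|x|=x\vee(-x)$. A fuzzy Riesz homomorphism is a linear map with $T(x\vee y)=Tx\vee Ty$; $T(E)$ is a fuzzy Riesz subspace of $F$ with the restricted fuzzy order. A subset $A$ is fuzzy solid if $\mu(|x|,|y|)>\frac12$ and $y\in A$ imply $x\in A$; a fuzzy ideal is a fuzzy solid vector subspace. $T^{-1}(B)=\{x\in E: Tx\in B\}$. *)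

(* Defs.v *)
From HB Require Import structures.
From mathcomp Require Import all_boot all_order all_algebra.
From mathcomp Require Import reals.
Set Implicit Arguments. Unset Strict Implicit. Unset Printing Implicit Defensive.
Import Order.TTheory GRing.Theory Num.Theory.
Local Open Scope ring_scope.

Section FuzzyDefs.
Variable R : realType.

(* A fuzzy order mu on E (values in [0,1]). The transitivity condition
   mu(x,z) >= sup_y min(mu(x,y),mu(y,z)) is written pointwise in y. *)
Definition fuzzy_order (E : Type) (mu : E -> E -> R) : Prop :=
  (forall x y, 0 <= mu x y <= 1) /\
  (forall x, mu x x = 1) /\
  (forall x y, mu x y + mu y x > 1 -> x = y) /\
  (forall x y z, Num.min (mu x y) (mu y z) <= mu x z).

Definition fle (E : Type) (mu : E -> E -> R) (x y : E) : Prop := mu x y > 2^-1.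

Definition fuzzy_ordered_linear_space (E : lmodType R) (mu : E -> E -> R) : Prop :=
  fuzzy_order mu /\
  (forall x1 x2 x, fle mu x1 x2 -> mu x1 x2 <= mu (x1 + x) (x2 + x)) /\
  (forall x1 x2 (a : R), fle mu x1 x2 -> 0 < a -> mu x1 x2 <= mu (a *: x1) (a *: x2)).

Definition is_sup_in (E : Type) (mu : E -> E -> R) (S : E -> Prop) (x y s : E) : Prop :=
  S s /\ fle mu x s /\ fle mu y s /\
  (forall u, S u -> fle mu x u -> fle mu y u -> fle mu s u).

Definition is_inf_in (E : Type) (mu : E -> E -> R) (S : E -> Prop) (x y s : E) : Prop :=
  S s /\ fle mu s x /\ fle mu s y /\
  (forall u, S u -> fle mu u x -> fle mu u y -> fle mu u s).

Definition fuzzy_riesz_space (E : lmodType R) (mu : E -> E -> R) : Prop :=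
  fuzzy_ordered_linear_space mu /\
  (forall x y : E, exists s, is_sup_in mu (fun _ => True) x y s) /\
  (forall x y : E, exists s, is_inf_in mu (fun _ => True) x y s).

(* T (x \/ y) = T x \/ T y, with sups uniquely determined *)
Definition fuzzy_riesz_hom (E F : lmodType R) (mu : E -> E -> R) (nu : F -> F -> R)
  (T : {linear E -> F}) : Prop :=
  forall x y s, is_sup_in mu (fun _ => True) x y s ->
    is_sup_in nu (fun _ => True) (T x) (T y) (T s).

Definition vsubspace (E : lmodType R) (A : E -> Prop) : Prop :=
  A 0 /\ (forall x y, A x -> A y -> A (x + y)) /\ (forall (a : R) x, A x -> A (a *: x)).

(* A is fuzzy solid in the subspace S (with the restricted fuzzy order):
   |x| = x \/ (-x) computed in S. *)
Definition fuzzy_solid_in (E : lmodType R) (mu : E -> E -> R) (S A : E -> Prop) : Prop :=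
  forall x y ax ay, S x -> S y ->
    is_sup_in mu S x (- x) ax -> is_sup_in mu S y (- y) ay ->
    fle mu ax ay -> A y -> A x.

Definition fuzzy_ideal_in (E : lmodType R) (mu : E -> E -> R) (S A : E -> Prop) : Prop :=
  (forall x, A x -> S x) /\ vsubspace A /\ fuzzy_solid_in mu S A.

Definition fuzzy_ideal (E : lmodType R) (mu : E -> E -> R) (A : E -> Prop) : Prop :=
  fuzzy_ideal_in mu (fun _ => True) A.

End FuzzyDefs.

(* Main.v *)
Require Import Defs.
From HB Require Import structures.
From mathcomp Require Import all_boot all_order all_algebra.
From mathcomp Require Import reals.
Import Order.TTheory GRing.Theory Num.Theory.
Local Open Scope ring_scope.

Lemma half_lt1 (R : realType) : (2^-1 : R) < 1.
Proof. by rewrite invf_lt1 // ltr1n. Qed.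

Lemma sup_lift (R : realType) (E F : lmodType R)
  (nu : F -> F -> R) (T : {linear E -> F}) (S : F -> Prop) a b s :
  (forall x, S (T x)) ->
  is_sup_in nu (fun _ => True) a b (T s) -> is_sup_in nu S a b (T s).
Proof.
move=> HS [_ [h1 [h2 h3]]]; split; first exact: HS.
by split=> //; split=> // u _; apply: h3.
Qed.

Lemma gen (R : realType) (E F : lmodType R)
  (mu : E -> E -> R) (nu : F -> F -> R) (T : {linear E -> F}) (S : F -> Prop) :
  fuzzy_riesz_space mu -> fuzzy_riesz_hom mu nu T ->
  (forall x, S (T x)) ->
  forall B : F -> Prop, fuzzy_ideal_in nu S B -> fuzzy_ideal mu (fun x => B (T x)).
Proof.
move=> [[[_ [refl _]] _] _] hom HS B [_ [[B0 [BD BZ]] Bs]].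
split=> //; split.
  split; first by rewrite linear0.
  by split=> [x y hx hy|a x hx]; [rewrite linearD; apply: BD | rewrite linearZ; apply: BZ].
move=> x y ax ay _ _ hx hy hle hB.
have supay : is_sup_in mu (fun _ => True) ax ay ay.
  case: hy => [_ [_ [_ _]]].
  split=> //; split=> //; split; first by rewrite /fle refl half_lt1.
  by move=> u _ _ ?.
have [_ [hT _]] := hom _ _ _ supay.
have hx' := hom _ _ _ hx; have hy' := hom _ _ _ hy.
rewrite linearN in hx'; rewrite linearN in hy'.
apply: (Bs (T x) (T y) (T ax) (T ay) (HS x) (HS y)) => //.
- exact: sup_lift.
- exact: sup_lift.
Qed.

Theorem theorem2p5 (R : realType) (E F : lmodType R)
  (mu : E -> E -> R) (nu : F -> F -> R) (T : {linear E -> F}) :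
  fuzzy_riesz_space mu -> fuzzy_riesz_space nu -> fuzzy_riesz_hom mu nu T ->
  (forall B : F -> Prop,
     fuzzy_ideal_in nu (fun z => exists x, z = T x) B ->
     fuzzy_ideal mu (fun x => B (T x))) /\
  (forall B1 : F -> Prop,
     fuzzy_ideal nu B1 -> fuzzy_ideal mu (fun x => B1 (T x))).
Proof.
move=> hE _ hom; split=> B hB.
  by apply: (@gen R E F mu nu T _ hE hom _ B hB) => x; exists x.
by apply: (@gen R E F mu nu T _ hE hom _ B hB).
Qed.
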